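(* Let $M$ be a matroid of rank $r$ on a finite linearly ordered set $E$. Then $\mathcal A(M)$ is an antichain, and $\mathcal A(U)\cap\mathcal A(U')=\emptyset$ for all distinct $U,U'\in\mathcal U^*(M)$.
   Context: Graded lexicographic order on $2^E$: $X\prec Y$ if $|X|<|Y|$, or $|X|=|Y|$ and $\min(X\triangle Y)\in X$; $\min\mathcal X$ is the $\prec$-smallest member of a nonempty $\mathcal X$. $X$ is $k$-closed in $M$ if $\mathrm{cl}_M(Y)\subseteq X$ for all $Y\subseteq X$ with $|Y|\le k$; $\mathrm{cl}_k(X)$ is the intersection of all $k$-closed supersets of $X$ (so $\mathrm{cl}_{-1}(X)=X$). For a flat $F$ of rank $k$, $U^*_F=\min\{U:\mathrm{cl}_{k-1}(U)=F\}$; $\mathcal U^*_k=\{U^*_F: F\text{ a flat of rank }k,\ |U^*_F|>k\}$ for $0\le k\le r-1$, and $\mathcal U^*(M)=\bigcup_{k=0}^{r-1}\mathcal U^*_k$. For $U\in\mathcal U^*_k$ define $\mathcal A(U)=\binom{U}{r-1}$ if $k=r-1$; $\mathcal A(U)=\binom{U}{k}\setminus\{\min\binom{U}{k}\}$ if $0<k<r-1$; $\mathcal A(U)=\binom{U}{1}$ if $k=0$. Here $\binom{U}{j}$ is the set of $j$-subsets of $U$. Finally $\mathcal A(M)=\bigcup_{k=0}^{r-1}\bigcup_{U\in\mathcal U^*_k}\mathcal A(U)$. *)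

(* Defs.v *)
From mathcomp Require Import all_boot all_order all_algebra.
Set Implicit Arguments. Unset Strict Implicit. Unset Printing Implicit Defensive.

(* Ground set E = 'I_n = {0,...,n-1} with its natural linear order. *)

Record matroid (n : nat) := Matroid {
  indep : pred {set 'I_n};
  indep0 : indep set0;
  indep_sub : forall A B : {set 'I_n}, B \subset A -> indep A -> indep B;
  indep_aug : forall A B : {set 'I_n}, indep A -> indep B -> #|A| < #|B| ->
     exists2 e, e \in B :\: A & indep (e |: A)
}.

Section Defs.
Variables (n : nat) (M : matroid n).
Local Notation E := 'I_n.

Definition rk (X : {set E}) : nat :=
  \max_(Y : {set E} | (Y \subset X) && indep M Y) #|Y|.
Definition mrank : nat := rk [set: E].

Definition cl (X : {set E}) : {set E} := [set e | rk (e |: X) == rk X].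
Definition is_flat (F : {set E}) : bool := cl F == F.

Definition glex_lt (X Y : {set E}) : bool :=
  (#|X| < #|Y|) ||
  ((#|X| == #|Y|) &&
   [exists x in X :\: Y,
      [forall y in (X :\: Y) :|: (Y :\: X), (nat_of_ord x <= nat_of_ord y)%N]]).

(* the glex-smallest member of a family (set0 if the family is empty) *)
Definition glex_min (F : {set {set E}}) : {set E} :=
  odflt set0 [pick U in F | [forall V in F, (V == U) || glex_lt U V]].

(* k-closed sets, k an integer (k = -1 allowed) *)
Definition kclosed (k : int) (X : {set E}) : bool :=
  [forall Y : {set E}, ((Y \subset X) && (#|Y|%:Z <= k)%R) ==> (cl Y \subset X)].

Definition clk (k : int) (X : {set E}) : {set E} :=
  \bigcap_(Y : {set E} | (X \subset Y) && kclosed k Y) Y.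

Definition Ustar (F : {set E}) : {set E} :=
  glex_min [set U : {set E} | clk ((rk F)%:Z - 1)%R U == F].

Definition Ustar_k (k : nat) : {set {set E}} :=
  [set Ustar F | F in [set F : {set E} | is_flat F && (rk F == k) && (k < #|Ustar F|)]].

Definition binom (U : {set E}) (j : nat) : {set {set E}} :=
  [set X : {set E} | (X \subset U) && (#|X| == j)].

Definition Aset (k : nat) (U : {set E}) : {set {set E}} :=
  if k == mrank.-1 then binom U mrank.-1
  else if k == 0 then binom U 1
  else binom U k :\ glex_min (binom U k).

Definition AM : {set {set E}} :=
  \bigcup_(k < mrank) \bigcup_(U in Ustar_k k) Aset k U.

Definition UstarM : {set {set E}} := \bigcup_(k < mrank) Ustar_k k.

Definition antichain (F : {set {set E}}) : Prop :=
  forall X Y, X \in F -> Y \in F -> X \subset Y -> X = Y.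

End Defs.

(* Main.v *)
Require Import Defs.
From mathcomp Require Import all_boot all_order all_algebra.
From mathcomp Require Import zify.
Set Implicit Arguments. Unset Strict Implicit. Unset Printing Implicit Defensive.

Section Aux.
Variables (n : nat) (M : matroid n).
Local Notation E := 'I_n.
Local Notation rk := (rk M).
Local Notation cl := (cl M).

Lemma rk_le_card (X : {set E}) : rk X <= #|X|.
Proof. by apply/bigmax_leqP => Y /andP[sub _]; apply: subset_leq_card. Qed.

Lemma rk_ge (I X : {set E}) : I \subset X -> indep M I -> #|I| <= rk X.
Proof. by move=> s i; rewrite /Defs.rk; apply: (leq_bigmax_cond (P := fun Y : {set E} => (Y \subset X) && indep M Y) (F := fun Y : {set E} => #|Y|)); rewrite s i. Qed.

Lemma rk_mono (A B : {set E}) : A \subset B -> rk A <= rk B.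
Proof.
move=> AB; apply/bigmax_leqP => Y /andP[YA iY].
by apply: rk_ge => //; apply: subset_trans AB.
Qed.

Lemma rk_witness (X : {set E}) : exists I : {set E}, [/\ I \subset X, indep M I & #|I| = rk X].
Proof.
have P0 : (set0 \subset X) && indep M set0 by rewrite sub0set indep0.
rewrite /Defs.rk (bigmax_eq_arg set0 P0).
case: arg_maxnP => // I /andP[IX iI] _.
by exists I.
Qed.

Lemma indep_rk (X : {set E}) : indep M X -> rk X = #|X|.
Proof. by move=> iX; apply/eqP; rewrite eqn_leq rk_le_card rk_ge. Qed.

Lemma rk_indep (X : {set E}) : rk X = #|X| -> indep M X.
Proof.
move=> h; have [I [IX iI cI]] := rk_witness X.
have -> : X = I by apply/esym/eqP; rewrite eqEcard IX cI h leqnn.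
exact: iI.
Qed.

Lemma rk0 : rk set0 = 0.
Proof. by apply/eqP; rewrite -leqn0 -(cards0 E) rk_le_card. Qed.

Lemma cl_span (F X : {set E}) k : cl F = F -> rk F = k -> X \subset F -> indep M X -> #|X| = k ->
  cl X = F.
Proof.
move=> clF rF XF iX cX; apply/setP => e; rewrite inE.
apply/eqP/idP => [h|eF].
- rewrite -clF inE; apply/eqP.
  have [I [IeF iI cI]] := rk_witness (e |: F).
  have ge : rk F <= rk (e |: F) by apply: rk_mono; apply: subsetUr.
  case: (ltngtP (rk (e |: F)) (rk F)) => // [|lt]; first by rewrite ltnNge ge.
  have ltXI : #|X| < #|I| by rewrite cI cX -rF.
  have [f /setDP[fI fX] ifX] := indep_aug iX iI ltXI.
  have cfX : #|f |: X| = k.+1 by rewrite cardsU1 fX cX.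
  have : f \in e |: F by apply: (subsetP IeF).
  case/setU1P => [fe|fF].
  + have sub : f |: X \subset e |: X by rewrite fe.
    by have := rk_ge sub ifX; rewrite cfX h indep_rk // cX ltnn.
  + have sub : f |: X \subset F by rewrite subUset sub1set fF XF.
    by have := rk_ge sub ifX; rewrite cfX rF ltnn.
- apply/eqP; rewrite eqn_leq; apply/andP; split.
  + rewrite (indep_rk iX) cX -rF; apply: rk_mono; by rewrite subUset sub1set eF XF.
  + by apply: rk_mono; rewrite subsetU1.
Qed.

Lemma dep_small (X : {set E}) : ~~ indep M X ->
  exists e, exists2 Z : {set E}, [/\ e \in X, Z \subset X :\ e & #|Z| < #|X|] & e \in cl Z.
Proof.
move=> dX; have [I [IX iI cI]] := rk_witness X.
have ltI : #|I| < #|X|.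
  rewrite ltn_neqAle subset_leq_card // andbT; apply/negP => /eqP h.
  by move: dX; rewrite rk_indep // -cI h.
have : X :\: I != set0.
  by rewrite setD_eq0; apply/negP => /subset_leq_card; rewrite leqNgt ltI.
case/set0Pn => e /setDP[eX eI].
exists e; exists I.
  split => //; apply/subsetP => x xI; rewrite !inE (subsetP IX) // andbT.
  by apply/negP => /eqP xe; rewrite -xe xI in eI.
rewrite inE; apply/eqP/anti_leq/andP; split.
  by rewrite (indep_rk iI) cI; apply: rk_mono; rewrite subUset sub1set eX IX.
by apply: rk_mono; rewrite subsetU1.
Qed.

End Aux.
Section Aux2.
Variables (n : nat) (M : matroid n).
Local Notation E := 'I_n.
Local Notation glex_lt := (@glex_lt n).

Lemma glex_irr (U : {set E}) : ~~ glex_lt U U.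
Proof.
rewrite /Defs.glex_lt ltnn /= eqxx /=; apply/existsP => -[x].
by rewrite setDv inE.
Qed.

Lemma glex_card (U V : {set E}) : glex_lt U V -> #|U| <= #|V|.
Proof. by case/orP => [/ltnW//|/andP[/eqP-> _]]. Qed.

Lemma glex_asym (U V : {set E}) : glex_lt U V -> glex_lt V U -> False.
Proof.
move=> h1 h2; have c1 := glex_card h1; have c2 := glex_card h2.
have ec : #|U| = #|V| by apply/anti_leq; rewrite c1 c2.
move: h1 h2; rewrite /Defs.glex_lt ec ltnn /= eqxx /=.
case/existsP => x /andP[xUV /forallP hx]; case/existsP => y /andP[yVU /forallP hy].
have := hx y; rewrite inE yVU orbT /= => xy.
have := hy x; rewrite inE xUV orbT /= => yx.
have exy : x = y by apply/val_inj/anti_leq; rewrite xy yx.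
by move: xUV yVU; rewrite exy => /setDP[_ yV] /setDP[yV2 _]; rewrite yV2 in yV.
Qed.

Lemma glex_total (U V : {set E}) : U != V -> glex_lt U V || glex_lt V U.
Proof.
move=> nUV; rewrite /Defs.glex_lt.
case: (ltngtP #|U| #|V|) => //= ec.
set D := (U :\: V) :|: (V :\: U).
have : D != set0.
  apply/negP => /eqP D0; move/negP: nUV; apply; rewrite eqEsubset.
  by rewrite -!setD_eq0 -!subset0 -D0 subsetUl subsetUr.
case/set0Pn => i0 Di0.
case: (arg_minnP (fun i : E => val i) Di0) => m Dm mmin.
have : m \in D := Dm. rewrite /D in_setU => /orP[mU|mV].
- apply/orP; left; apply/existsP; exists m; rewrite mU /=.
  by apply/forallP => y; apply/implyP => /mmin.
- apply/orP; right; apply/existsP; exists m; rewrite mV /=.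
  by apply/forallP => y; apply/implyP; rewrite setUC => /mmin.
Qed.

Lemma glex_minP (Fam : {set {set E}}) (U : {set E}) :
  glex_min Fam = U -> U != set0 ->
  U \in Fam /\ (forall V, V \in Fam -> (V == U) || glex_lt U V).
Proof.
rewrite /glex_min; case: pickP => [U0 /andP[U0F /forallP h] /= <- _ |_ /= <-];
  last by rewrite eqxx.
by split => // V VF; have := h V; rewrite VF.
Qed.

Lemma glex_below (Fam : {set {set E}}) (X : {set E}) :
  X \in Fam -> X != glex_min Fam -> exists2 X1, X1 \in Fam & glex_lt X1 X.
Proof.
rewrite /glex_min; case: pickP => [U0 /andP[U0F /forallP h] /= XF nX |none XF _].
  exists U0 => //; have := h X; rewrite XF /= (negbTE nX) //.
have := none X; rewrite XF /= => /negbT; rewrite negb_forall => /existsP[V].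
rewrite negb_imply negb_or => /andP[VF /andP[nVX nlt]].
exists V => //; have := glex_total nVX; by rewrite (negbTE nlt) orbF.
Qed.

Lemma clk_sub c (X : {set E}) : X \subset clk M c X.
Proof. by apply/bigcapsP => Y /andP[]. Qed.

Lemma clk_eq c (A B : {set E}) :
  (forall Y, kclosed M c Y -> (A \subset Y) = (B \subset Y)) -> clk M c A = clk M c B.
Proof.
move=> h; rewrite /clk; apply: eq_bigl => Y.
by case kY: (kclosed M c Y); rewrite ?andbF ?andbT // h.
Qed.

Lemma kclosed_cl c (Y Z : {set E}) : kclosed M c Y -> Z \subset Y ->
  (#|Z|%:Z <= c)%R -> cl M Z \subset Y.
Proof. by move=> /forallP /(_ Z) /implyP h ZY cZ; apply: h; rewrite ZY. Qed.

End Aux2.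
Section Aux3.
Variables (n : nat) (M : matroid n).
Local Notation E := 'I_n.
Local Notation glex_lt := (@glex_lt n).

Definition Fam k (F : {set E}) := [set V : {set E} | clk M (k%:Z - 1)%R V == F].

Inductive props k (U F : {set E}) : Prop := Props of
  cl M F = F & rk M F = k & k < #|U| & U \in Fam k F &
      (forall V, V \in Fam k F -> (V == U) || glex_lt U V) & U = Ustar M F.

Lemma UstarkP k U : U \in Ustar_k M k -> exists F, props k U F.
Proof.
case/imsetP => F; rewrite inE => /andP[/andP[/eqP flat /eqP rkF] big] ->.
exists F; have nz : Ustar M F != set0.
  by apply/negP => /eqP e; rewrite e cards0 in big.
have [h1 h2] := glex_minP (erefl (Ustar M F)) nz.
by split => //; rewrite /Fam -rkF.
Qed.

Lemma props_sub k U F : props k U F -> U \subset F.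
Proof. by case=> _ _ _; rewrite inE => /eqP <- _ _; apply: clk_sub. Qed.

Lemma props_small k (U F : {set E}) e (Z : {set E}) : props k U F -> e \in U -> Z \subset U :\ e ->
  #|Z| < k -> e \in cl M Z -> False.
Proof.
move=> [clF rF big UF Umin _] eU ZU cZ eZ.
have : U :\ e \in Fam k F.
  move: UF; rewrite !inE => /eqP <-; apply/eqP/clk_eq => Y kY.
  apply/idP/idP => [sub|sub]; last by apply: subset_trans sub; apply: subsetDl.
  have clY : cl M Z \subset Y.
    apply: kclosed_cl kY _ _; first exact: subset_trans ZU sub.
    lia.
  by rewrite -(setD1K eU) subUset sub1set (subsetP clY) // sub.
move/Umin => /orP[/eqP h|/glex_card].
  by move: eU; rewrite -h !inE eqxx.
by rewrite (cardsD1 e U) eU add1n ltnn.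
Qed.

Lemma props_indep k (U F X : {set E}) : props k U F -> X \subset U -> #|X| <= k ->
  indep M X.
Proof.
move=> pU XU cX; apply/negPn/negP => /dep_small [e [Z [eX ZX cZ] eZ]].
apply: (props_small pU (e := e) (Z := Z)) => //.
- exact: (subsetP XU).
- by apply: subset_trans ZX _; apply: setSD.
- exact: leq_trans cZ cX.
Qed.

Lemma props_span k (U F X : {set E}) : props k U F -> X \subset U -> #|X| = k ->
  cl M X = F.
Proof.
move=> pU XU cX; case: (pU) => clF rF _ _ _ _.
apply: (cl_span clF rF _ _ cX).
  exact: subset_trans XU (props_sub pU).
by apply: props_indep pU XU _; rewrite cX.
Qed.

Lemma props_loop k (U F : {set E}) x : props k U F -> 0 < k -> x \in U ->
  x \in cl M set0 -> False.
Proof.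
move=> pU k0 xU xl; apply: (props_small pU xU _ _ xl) => //.
  by rewrite sub0set.
by rewrite cards0.
Qed.

Lemma props_loop0 (U F : {set E}) x : props 0 U F -> x \in U -> x \in cl M set0.
Proof.
move=> pU xU; case: (pU) => _ rF _ _ _ _.
rewrite inE rk0; apply/eqP/eqP; rewrite -leqn0 -rF; apply: rk_mono.
by rewrite setU0 sub1set (subsetP (props_sub pU)).
Qed.

Lemma W_arg k k' (U F U' F' X X1 : {set E}) : props k U F -> props k' U' F' ->
  k < k' -> X \subset U -> #|X| = k -> X \subset U' -> X1 \subset U -> #|X1| = k ->
  glex_lt X1 X -> False.
Proof.
move=> pU pU' kk' XU cX XU' X1U cX1 lt.
have sX := props_span pU XU cX; have sX1 := props_span pU X1U cX1.
have FU := props_sub pU.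
case: (pU') => clF' rF' big' UF' Umin' _.
set W := (U' :\: X) :|: X1.
have WF : W \in Fam k' F'.
  move: UF'; rewrite !inE => /eqP <-; apply/eqP/clk_eq => Y kY.
  have ck : (#|X|%:Z <= k'%:Z - 1)%R by lia.
  have ck1 : (#|X1|%:Z <= k'%:Z - 1)%R by lia.
  apply/idP/idP => sub.
  - have X1Y : X1 \subset Y by apply: subset_trans sub; apply: subsetUr.
    have := kclosed_cl kY X1Y ck1; rewrite sX1 => FY.
    apply/subsetP => y yU'; case: (boolP (y \in X)) => yX.
      by apply: (subsetP FY); apply: (subsetP FU); apply: (subsetP XU).
    by apply: (subsetP sub); rewrite !inE yX yU'.
  - have XY : X \subset Y by apply: subset_trans XU' sub.
    have := kclosed_cl kY XY ck; rewrite sX => FY.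
    rewrite subUset (subset_trans (subsetDl _ _) sub) /=.
    exact: subset_trans X1U (subset_trans FU FY).
set I := (U' :\: X) :&: X1.
have cW : #|W| + #|I| = #|U'|.
  have kU' : k <= #|U'| by rewrite -cX subset_leq_card.
  by rewrite cardsUI (cardsDS XU') cX1 cX; lia.
have glt : glex_lt W U'.
  rewrite /Defs.glex_lt; case: (boolP (I == set0)) => [/eqP I0|In0]; last first.
    apply/orP; left; move: In0; rewrite -card_gt0; lia.
  have eW : #|W| = #|U'| by rewrite -cW I0 cards0 addn0.
  rewrite eW ltnn eqxx /=.
  move: lt; rewrite /Defs.glex_lt cX cX1 ltnn eqxx /= => /existsP[x /andP[xX1X /forallP hx]].
  apply/existsP; exists x; apply/andP; split.
    move/setDP: xX1X => [xX1 nxX]; rewrite inE (subsetP (subsetUr _ _) _ xX1) andbT.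
    apply/negP => xU'; have : x \in I by rewrite !inE xU' nxX xX1.
    by rewrite I0 inE.
  apply/forallP => y; apply/implyP => yD; apply: (implyP (hx y)).
  move: yD; rewrite !inE.
  case yX1: (y \in X1); case yX: (y \in X); case yU: (y \in U') => //=.
  by move: (subsetP XU' y); rewrite yX yU => /(_ isT).
have := Umin' W WF; case/orP => [/eqP e|].
  by move: glt; rewrite e (negbTE (glex_irr U')).
exact: glex_asym glt.
Qed.


Definition sz r k := if k == r.-1 then r.-1 else if k == 0 then 1 else k.

Lemma sz_pos r k : 0 < k -> k < r -> sz r k = k.
Proof. by rewrite /sz; case: ifP => [/eqP -> //|]; case: ifP => //; lia. Qed.

Lemma sz_le r k : k < r -> sz r k <= r.-1.
Proof. by rewrite /sz; case: ifP => [//|/negbT]; case: ifP => [/eqP -> |]; lia. Qed.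

Lemma sz0 r : 1 < r -> sz r 0 = 1.
Proof. by rewrite /sz; case: ifP => //; lia. Qed.

Lemma AsetP k (U X : {set E}) : X \in Aset M k U -> X \subset U /\ #|X| = sz (mrank M) k.
Proof.
rewrite /Aset /sz; case: ifP => _; first by rewrite inE => /andP[-> /eqP].
case: ifP => _; first by rewrite inE => /andP[-> /eqP].
by rewrite in_setD1 inE => /andP[_ /andP[-> /eqP]].
Qed.

Lemma Aset_ne k (U X : {set E}) : X \in Aset M k U -> k != (mrank M).-1 -> k != 0 ->
  X != glex_min (binom U k) /\ X \in binom U k.
Proof.
rewrite /Aset => + /negbTE h1 /negbTE h2; rewrite h1 h2.
by rewrite in_setD1 => /andP[-> ->].
Qed.

End Aux3.
Theorem lemma5p4 (n : nat) (M : matroid n) :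
  antichain (AM M) /\
  (forall (k k' : nat) (U U' : {set 'I_n}),
     k < mrank M -> k' < mrank M ->
     U \in Ustar_k M k -> U' \in Ustar_k M k' -> U != U' ->
     Aset M k U :&: Aset M k' U' = set0).
Proof.
split.
- move=> X Y /bigcupP[i _ /bigcupP[U Ui XA]] /bigcupP[i' _ /bigcupP[U' Ui' YA]] XY.
  have ir := ltn_ord i; have ir' := ltn_ord i'.
  apply/eqP; rewrite eqEcard XY /= leqNgt; apply/negP => lt.
  have [XU cX] := AsetP XA; have [YU' cY] := AsetP YA.
  have [F pU] := UstarkP Ui; have [F' pU'] := UstarkP Ui'.
  case: (eqVneq (i : nat) (mrank M).-1) => [e|ne].
    by move: lt; rewrite cX cY /sz e eqxx ltnNge sz_le.
  case: (posnP i) => [i0|ipos].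
    have r1 : 1 < mrank M by move: ne; rewrite i0; lia.
    move: (cX); rewrite i0 sz0 // => /eqP/cards1P[x Xx].
    have xU : x \in U by apply: (subsetP XU); rewrite Xx set11.
    have xU' : x \in U' by apply: (subsetP YU'); apply: (subsetP XY); rewrite Xx set11.
    have i'pos : 0 < i'.
      rewrite lt0n; apply/negP => /eqP i'0; move: lt; rewrite cX cY i0 i'0 sz0 //.
    rewrite i0 in pU.
    exact: props_loop pU' i'pos xU' (props_loop0 pU xU).
  have [nX XB] := Aset_ne XA ne (lt0n_neq0 ipos).
  have [X1 X1B glt] := glex_below XB nX.
  move: X1B XB; rewrite !inE => /andP[X1U /eqP cX1] /andP[_ /eqP cXi].
  have ii' : i < i'.
    move: lt; rewrite cY cXi /sz; case: ifP => [/eqP -> //|]; case: ifP; lia.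
  exact: W_arg pU pU' ii' XU cXi (subset_trans XY YU') X1U cX1 glt.
- move=> k k' U U' kr kr' Uk Uk' nUU'.
  apply/eqP; rewrite -subset0; apply/subsetP => X; rewrite inE => /andP[XA XA'].
  exfalso.
  have [XU cX] := AsetP XA; have [XU' cX'] := AsetP XA'.
  have [F pU] := UstarkP Uk; have [F' pU'] := UstarkP Uk'.
  have same : F = F' -> False.
    move=> eF; case: pU => _ _ _ _ _ eU; case: pU' => _ _ _ _ _ eU'.
    by move/negP: nUU'; apply; rewrite eU eU' eF.
  have loopc (k1 k2 : nat) (U1 U2 F1 F2 : {set 'I_n}) : props M k1 U1 F1 -> props M k2 U2 F2 -> k1 = 0 -> 0 < k2 ->
      k2 < mrank M -> X \subset U1 -> X \subset U2 -> #|X| = sz (mrank M) k1 ->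
      #|X| = sz (mrank M) k2 -> False.
    move=> p1 p2 e1 k2pos k2r XU1 XU2 c1 c2.
    move: c1; rewrite c2 sz_pos // e1 sz0; last by lia.
    move=> k21; move: (c2); rewrite sz_pos // k21 => /eqP/cards1P[x Xx].
    have xU1 : x \in U1 by apply: (subsetP XU1); rewrite Xx set11.
    have xU2 : x \in U2 by apply: (subsetP XU2); rewrite Xx set11.
    rewrite e1 in p1.
    exact: props_loop p2 k2pos xU2 (props_loop0 p1 xU1).
  case: (posnP k) => [k0|kpos]; case: (posnP k') => [k'0|k'pos].
  + apply: same; rewrite k0 in pU; rewrite k'0 in pU'.
    have s0 : set0 \subset U by rewrite sub0set.
    have s0' : set0 \subset U' by rewrite sub0set.
    by rewrite -(props_span pU s0 (cards0 _)) -(props_span pU' s0' (cards0 _)).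
  + exact: loopc pU pU' k0 k'pos kr' XU XU' cX cX'.
  + exact: loopc pU' pU k'0 kpos kr XU' XU cX' cX.
  + have ekk : k = k' by rewrite -(sz_pos kpos kr) -cX cX' sz_pos.
    apply: same; rewrite -ekk in pU' cX'.
    rewrite sz_pos // in cX.
    by rewrite -(props_span pU XU cX) -(props_span pU' XU' cX).
Qed.
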